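(* For every positive integer $n$, with $M_m=2(m+1)H_m-4m$ for $m\ge 0$, $$\sum_{j=1}^{n}M_{j-1}M_{n-j}=4\sum_{j=1}^{n}jH_{j-1}(n-j+1)H_{n-j}-\frac{8}{3}n(n^2-1)H_{n+1}+\frac{44n}{9}(n^2-1).$$
   Context: $H_m=\sum_{k=1}^m 1/k$ denotes the $m$th harmonic number, with $H_0=0$. *)

(* Defs.v *)
From mathcomp Require Import all_boot all_order all_algebra.
Set Implicit Arguments. Unset Strict Implicit. Unset Printing Implicit Defensive.
Import Order.TTheory GRing.Theory Num.Theory.
Local Open Scope ring_scope.

Definition harmonic (R : numFieldType) (m : nat) : R :=
  \sum_(1 <= k < m.+1) (k%:R)^-1.

Definition Mseq (R : numFieldType) (m : nat) : R :=
  2 * (m.+1)%:R * harmonic R m - 4 * m%:R.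

(* Main.v *)
Require Import Defs.
From mathcomp Require Import all_boot all_order all_algebra.
From mathcomp Require Import ring.
Import Order.TTheory GRing.Theory Num.Theory.
Local Open Scope ring_scope.

Ltac nzt := repeat (apply/andP; split); rewrite ?paddr_eq0 ?ler0n ?ler01 ?pnatr_eq0 ?oner_eq0 ?andbF ?andFb //.
Section S.
Variable R : numFieldType.
Local Notation h := (harmonic R).

Lemma hS m : h m.+1 = h m + (m.+1)%:R^-1.
Proof. by rewrite /harmonic big_nat_recr. Qed.

Lemma nz m : (m.+1)%:R != 0 :> R.
Proof. by rewrite pnatr_eq0. Qed.

Lemma Tform m : \sum_(i < m) (i.+1)%:R * h i =
  m%:R * (m.+1)%:R / 2 * h m.+1 - m%:R / 2 - m%:R * (m%:R - 1) / 4 - m%:R.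
Proof.
elim: m => [|m IH]; first by rewrite big_ord0 /harmonic big_nat1; field.
rewrite big_ord_recr /= IH !hS.
have := nz m; have := nz m.+1; have := nz 1; have := nz 3.
move=> *; field; nzt.
Qed.

Lemma Uform n : \sum_(i < n) i.+1%:R * (n%:R - 1 - i%:R) * h i =
  n%:R * (n%:R ^+ 2 - 1) / 6 * h n.+1 - 11 / 36 * n%:R * (n%:R ^+ 2 - 1)
  + n%:R * (n%:R - 1) * (n%:R - 2) / 6.
Proof.
elim: n => [|n IH]; first by rewrite big_ord0 /harmonic big_nat1; field; nzt.
rewrite big_ord_recr /=.
have -> : \sum_(i < n) i.+1%:R * (n.+1%:R - 1 - i%:R) * h i =
  \sum_(i < n) i.+1%:R * (n%:R - 1 - i%:R) * h i + \sum_(i < n) i.+1%:R * h i.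
  by rewrite -big_split /=; apply: eq_bigr => i _; ring.
rewrite IH Tform !hS.
have := nz n; have := nz n.+1; have := nz n.+2; have := nz 1; have := nz 5; have := nz 35.
move=> *; field; nzt.
Qed.

Lemma Vform n : \sum_(i < n) i%:R * (n%:R - 1 - i%:R) =
  n%:R * (n%:R - 1) * (n%:R - 2) / 6 :> R.
Proof.
elim: n => [|n IH]; first by rewrite big_ord0; field; nzt.
rewrite big_ord_recr /=.
have -> : \sum_(i < n) i%:R * (n.+1%:R - 1 - i%:R) =
  \sum_(i < n) i%:R * (n%:R - 1 - i%:R) + \sum_(i < n) i%:R :> R.
  by rewrite -big_split /=; apply: eq_bigr => i _; ring.
have -> : \sum_(i < n) i%:R = n%:R * (n%:R - 1) / 2 :> R.
  elim: n {IH} => [|n IH]; first by rewrite big_ord0; field; nzt.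
  by rewrite big_ord_recr /= IH; field; nzt.
by rewrite IH; field; nzt.
Qed.
End S.

Theorem lemma3p2 (R : numFieldType) (n : nat) (hn : (0 < n)%N) :
  \sum_(1 <= j < n.+1) Mseq R (j.-1) * Mseq R (n - j)
  = 4 * \sum_(1 <= j < n.+1)
          (j%:R * harmonic R (j.-1) * (n - j).+1%:R * harmonic R (n - j))
    - 8 / 3 * n%:R * (n%:R ^+ 2 - 1) * harmonic R n.+1
    + 44 * n%:R / 9 * (n%:R ^+ 2 - 1).
Proof.
set h := harmonic R.
rewrite !big_add1 /= !big_mkord.
have c1 (i : 'I_n) : (n - i.+1)%N%:R = n%:R - 1 - i%:R :> R.
  by rewrite natrB ?ltn_ord // mulrS; ring.
have c2 (i : 'I_n) : (n - i.+1)%N.+1%:R = n%:R - i%:R :> R.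
  by rewrite mulrS c1; ring.
transitivity (\sum_(i < n)
  (4 * (i.+1%:R * h i * (n - i.+1)%N.+1%:R * h (n - i.+1)%N)
   - 8 * (i.+1%:R * (n%:R - 1 - i%:R) * h i)
   - 8 * (i%:R * (n%:R - i%:R) * h (n - i.+1)%N)
   + 16 * (i%:R * (n%:R - 1 - i%:R)))).
  apply: eq_bigr => i _; rewrite /Mseq -/h c1 c2; move: (h i) (h (n - i.+1)%N) => x y; ring.
rewrite big_split /= !sumrB -!mulr_sumr.
have U := Uform R n; rewrite -/h in U; clearbody h.
rewrite U Vform.
have -> : \sum_(i < n) i%:R * (n%:R - i%:R) * h (n - i.+1)%N =
          \sum_(i < n) i.+1%:R * (n%:R - 1 - i%:R) * h i.
  rewrite (reindex_inj rev_ord_inj) /=; apply: eq_bigr => i _.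
  have li := ltn_ord i; rewrite subnSK // subKn ?(ltnW li) // c1.
  move: (h i) => x; ring.
rewrite U.
move: (\sum_(i < n) i.+1%:R * h i * (n - i.+1).+1%:R * h (n - i.+1)%N) (h n.+1) => X y.
field; nzt.
Qed.
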